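(* Fix $\lambda\in(0,\tfrac1{16})$, $\nu=\sqrt{1-16\lambda}$, $t_1=\frac{1-\nu}{4\lambda}$, an integer $l\ge2$, $\ell=(l-1)(l+2)$, $t_i\in(0,t_1)$, and let $G(t)=\tfrac12-\lambda t$, $\beta(t)=1-2tG(t)$, $\gamma(t)=2G(t)$. For $\kappa\in\mathbb{R}$ define $D(t)=\ell+(\kappa-4)\beta'(t)-(\kappa^2-6\kappa+8)\gamma(t)$. If $\kappa\in[0,4]$, then for all $t\in[t_i,t_1]$, $D(t)\ge0$ and $D'(t)\le0$. *)

(* Defs.v *)
From Stdlib Require Import Reals Lra.
From Coquelicot Require Import Coquelicot.
Open Scope R_scope.

Definition Gf (lam t : R) : R := / 2 - lam * t.
Definition betaf (lam t : R) : R := 1 - 2 * t * Gf lam t.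
Definition gammaf (lam t : R) : R := 2 * Gf lam t.
Definition ellR (l : nat) : R := (INR l - 1) * (INR l + 2).
Definition Df (lam : R) (l : nat) (kappa t : R) : R :=
  ellR l + (kappa - 4) * Derive (betaf lam) t
  - (kappa ^ 2 - 6 * kappa + 8) * gammaf lam t.
Definition nuR (lam : R) : R := sqrt (1 - 16 * lam).
Definition t1R (lam : R) : R := (1 - nuR lam) / (4 * lam).

(* Main.v *)
Require Import Defs.
From Stdlib Require Import Reals Lra Lia.
From Coquelicot Require Import Coquelicot.
Open Scope R_scope.

Lemma dbeta (lam x : R) : Derive (betaf lam) x = 4 * lam * x - 1.
Proof.
  apply is_derive_unique. unfold betaf, Gf.
  auto_derive; [exact I | field].
Qed.

Lemma Dform (lam : R) (l : nat) (kappa : R) :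
  forall x, Df lam l kappa x =
   ellR l + (kappa - 4) * (4 * lam * x - 1) - (kappa ^ 2 - 6 * kappa + 8) * (2 * (/2 - lam * x)).
Proof. intro x. unfold Df. rewrite dbeta. unfold gammaf, Gf. ring. Qed.

Theorem lemma1 (lam : R) (l : nat) (ti kappa : R)
  (hlam : 0 < lam < / 16) (hl : (2 <= l)%nat)
  (hti : 0 < ti < t1R lam) (hkappa : 0 <= kappa <= 4) :
  forall t : R, ti <= t <= t1R lam ->
    0 <= Df lam l kappa t /\ Derive (Df lam l kappa) t <= 0.
Proof.
  intros t ht. split.
  - rewrite Dform.
    assert (Hl : 2 <= INR l) by (apply (le_INR 2); lia).
    assert (Hell : 4 <= ellR l) by (unfold ellR; nra).
    assert (Hnu : 0 <= nuR lam) by (unfold nuR; apply sqrt_pos).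
    assert (Hs : lam * t <= / 4).
    { assert (lam * t <= lam * t1R lam) by nra.
      unfold t1R in H. field_simplify in H; [|lra]. nra. }
    assert (0 <= lam * t) by nra.
    set (s := lam * t) in *.
    assert (E : (kappa - 4) * (4 * lam * t - 1) - (kappa ^ 2 - 6 * kappa + 8) * (2 * (/ 2 - lam * t))
              = (4 - kappa) * (kappa * (1 - 2 * s) - 1)) by (unfold s; field).
    assert (0 <= kappa * (1 - 2 * s)) by nra.
    assert (0 <= (4 - kappa) * (kappa * (1 - 2 * s))) by (apply Rmult_le_pos; lra).
    match goal with |- 0 <= ?A => replace A with (ellR l + (4 - kappa) * (kappa * (1 - 2 * s) - 1)) by (unfold s; field) end.
    nra.
  - rewrite (Derive_ext _ _ _ (Dform lam l kappa)).
    assert (Derive (fun x => ellR l + (kappa - 4) * (4 * lam * x - 1) - (kappa ^ 2 - 6 * kappa + 8) * (2 * (/ 2 - lam * x))) t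
      = 2 * lam * kappa * (kappa - 4)) as ->.
    { apply is_derive_unique. auto_derive; [exact I | field]. }
    assert (kappa * (kappa - 4) <= 0) by nra.
    assert (0 <= 2 * lam) by lra.
    replace (2 * lam * kappa * (kappa - 4)) with ((2 * lam) * (kappa * (kappa - 4))) by ring.
    apply Rmult_le_0_l; lra.
Qed.
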